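(* Let $w=w_1\cdots w_n$ be a word of length $n\ge 2$ using only two letters, such that $w_i\ne w_{n-i+1}$ for all $1\le i\le n$. Then for every positive integer $d$, $f(w,d)=\frac14\left((n+2)^d-(n-2)^d\right)$.
   Context: Let $[n]=\{1,\dots,n\}$, $n\ge 2$, $d\ge 1$. For $p\in[n]^d$ and $v\in\{-1,0,1\}^d$ with $v\ne\vec 0$, if $p+tv\in[n]^d$ for all $0\le t\le n-1$, the set $\ell=\{p,p+v,\dots,p+(n-1)v\}$ is called a line (with initial point $p$ and direction $v$). Each line has a unique representation $(p;v)$ in which the first nonzero coordinate of $v$ is $+1$ (its canonical pair); for such a representation write $\ell_i=p+(i-1)v$ for $1\le i\le n$. An $(n,d)$-grid is a function $G:[n]^d\to\Sigma$ for an arbitrary set of letters $\Sigma$. For a word $w=w_1\cdots w_n$, a line $\ell$ contains $w$ if $G(\ell_1)G(\ell_2)\cdots G(\ell_n)=w$ or $G(\ell_n)\cdots G(\ell_1)=w$. $f(w,G)$ is the number of lines of $[n]^d$ containing $w$, and $f(w,d)=\max_G f(w,G)$ over all $(n,d)$-grids $G$. *)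

(* Defs.v *)
From mathcomp Require Import all_boot all_order all_algebra.
Set Implicit Arguments. Unset Strict Implicit. Unset Printing Implicit Defensive.
Import Order.TTheory GRing.Theory Num.Theory.

(* Points of [n]^d; coordinate value k : 'I_n stands for k+1 in [n]. *)
Definition point (d n : nat) := {ffun 'I_d -> 'I_n}.

(* Directions in {-1,0,1}^d; c : 'I_3 encodes the integer c - 1. *)
Definition dir (d : nat) := {ffun 'I_d -> 'I_3}.
Definition dval (c : 'I_3) : int := (c%:Z - 1)%R.

Definition coord d n (p : point d n) (v : dir d) (t : nat) (i : 'I_d) : int :=
  ((p i)%:Z + t%:Z * dval (v i))%R.

Definition valid_line d n (p : point d n) (v : dir d) : bool :=
  [exists i, v i != 1 :> nat] &&
  [forall t : 'I_n, forall i, (0 <= coord p v t i)%R && (coord p v t i < n%:Z)%R].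

Definition canonical_dir d (v : dir d) : bool :=
  [forall i, ((v i != 1 :> nat) && [forall j : 'I_d, (j < i) ==> (v j == 1 :> nat)])
              ==> (v i == 2 :> nat)].

(* the point p + t v (meaningful when valid_line p v) ; it is ell_{t+1} *)
Definition pt d n (p : point d n) (v : dir d) (t : nat) : point d n :=
  [ffun i => insubd (p i) `|coord p v t i|%N].

Definition contains (S : eqType) d n (w : 'I_n -> S) (G : point d n -> S)
    (p : point d n) (v : dir d) : bool :=
  [forall t : 'I_n, G (pt p v t) == w t] ||
  [forall t : 'I_n, G (pt p v (rev_ord t)) == w t].

(* f(w,G): number of lines (counted through their canonical pairs) containing w *)
Definition fcount (S : eqType) d n (w : 'I_n -> S) (G : point d n -> S) : nat :=
  #|[set pv : point d n * dir d |
       [&& canonical_dir pv.2, valid_line pv.1 pv.2 & contains w G pv.1 pv.2]]|.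

Definition is_fmax (S : eqType) d n (w : 'I_n -> S) (m : nat) : Prop :=
  (exists G : point d n -> S, fcount w G = m) /\
  (forall G : point d n -> S, fcount w G <= m).

(* Main.v *)
Require Import Defs.
From mathcomp Require Import all_boot all_order all_algebra zify.
Set Implicit Arguments. Unset Strict Implicit. Unset Printing Implicit Defensive.

Section Main.
Variables (S : eqType) (n d k : nat) (w : 'I_n -> S) (a b : S).
Hypotheses (hn : n = k.*2) (hk : 0 < k).

Lemma km1_lt : k.-1 < n. Proof. rewrite hn; lia. Qed.
Lemma kk_lt : k < n. Proof. rewrite hn; lia. Qed.
Definition km1 : 'I_n := Ordinal km1_lt.
Definition kk : 'I_n := Ordinal kk_lt.
Lemma rev_km1 : rev_ord km1 = kk. Proof. apply: val_inj => /=; rewrite hn; lia. Qed.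
Lemma rev_kk : rev_ord kk = km1. Proof. apply: val_inj => /=; rewrite hn; lia. Qed.

Lemma valid_p2 (p : point d n) v i : valid_line p v -> (v i : nat) = 2 -> (p i : nat) = 0.
Proof.
move=> /andP [_ /forallP H] hv.
have hlt : n.-1 < n by rewrite hn; lia.
have /forallP /(_ i) /andP [h1 h2] := H (Ordinal hlt).
move: h1 h2; rewrite /Defs.coord /dval /= hv.
have := ltn_ord (p i); lia.
Qed.

Lemma valid_p0 (p : point d n) v i : valid_line p v -> (v i : nat) = 0 -> (p i : nat) = n.-1.
Proof.
move=> /andP [_ /forallP H] hv.
have hlt : n.-1 < n by rewrite hn; lia.
have /forallP /(_ i) /andP [h1 h2] := H (Ordinal hlt).
move: h1 h2; rewrite /Defs.coord /dval /= hv.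
have := ltn_ord (p i); lia.
Qed.

Lemma pt_val (p : point d n) v (t : nat) i : valid_line p v -> t < n ->
  (pt p v t i : nat) = if (v i == 1 :> nat) then (p i : nat)
                     else if (v i == 2 :> nat) then t else n.-1 - t.
Proof.
move=> hv ht; rewrite /pt ffunE val_insubd /Defs.coord /dval.
have := ltn_ord (v i).
case hvi: (v i : nat) => [|[|[|m]]] // _ /=.
- have := valid_p0 hv hvi; have := ltn_ord (p i).
  case: ifP; lia.
- case: ifP; have := ltn_ord (p i); lia.
- have := valid_p2 hv hvi; case: ifP; lia.
Qed.


Definition central (t : 'I_n) : bool := (t == km1) || (t == kk).
Lemma central_val t : central t = ((t : nat) == k.-1) || ((t : nat) == k).
Proof. by []. Qed.
Definition clv (t : 'I_n) : option 'I_n := if central t then None else Some t.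
Definition cl (x : point d n) : {ffun 'I_d -> option 'I_n} := [ffun i => clv (x i)].
Definition mid (l : point d n * dir d) := (pt l.1 l.2 km1, pt l.1 l.2 kk).
Definition dirof (x y : point d n) : dir d := [ffun i => inord (y i + 1 - x i)].
Definition pof (x y : point d n) : point d n :=
  [ffun i => insubd (x i) (if (dirof x y i == 2 :> nat) then 0
                           else if (dirof x y i == 0 :> nat) then n.-1 else x i)].
Definition lineof (x y : point d n) := (pof x y, dirof x y).

Lemma same_cl x y i : cl x = cl y ->
  (x i = y i) \/ ((x i : nat) = k.-1 /\ (y i : nat) = k) \/ ((x i : nat) = k /\ (y i : nat) = k.-1).
Proof.
move/ffunP/(_ i); rewrite !ffunE /clv !central_val.
case: ifP => hx; case: ifP => hy //; last by case=> ->; left.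
move=> _; move: hx hy => /orP [/eqP hx | /eqP hx] /orP [/eqP hy | /eqP hy].
- by left; apply: val_inj; rewrite /= hx hy.
- by right; left.
- by right; right.
- by left; apply: val_inj; rewrite /= hx hy.
Qed.

Lemma dirof_val x y i : cl x = cl y -> (dirof x y i : nat) = y i + 1 - x i.
Proof.
move=> h; rewrite ffunE inordK //.
case: (same_cl i h) => [->|[[h1 h2]|[h1 h2]]]; lia.
Qed.

Lemma dirof_swap x y i : cl x = cl y -> (dirof y x i : nat) + (dirof x y i : nat) = 2.
Proof.
move=> h; rewrite dirof_val // dirof_val //.
case: (same_cl i h) => [->|[[h1 h2]|[h1 h2]]]; lia.
Qed.

Lemma clE x i : cl x i = clv (x i). Proof. by rewrite ffunE. Qed.

Lemma clv_c t : central t -> clv t = None.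
Proof. by rewrite /clv => ->. Qed.

Lemma mid_cl l : valid_line l.1 l.2 -> cl (mid l).1 = cl (mid l).2.
Proof.
move=> hv; apply/ffunP => i; rewrite !clE.
have h1 := pt_val i hv km1_lt; have h2 := pt_val i hv kk_lt.
have := ltn_ord (l.2 i).
case e: (l.2 i : nat) h1 h2 => [|[|[|m]]] //= h1 h2 _.
- have c1 : central (pt l.1 l.2 km1 i).
    by rewrite central_val h1; apply/orP; first [by left; apply/eqP; lia | by right; apply/eqP; lia].
  have c2 : central (pt l.1 l.2 kk i).
    by rewrite central_val h2; apply/orP; first [by left; apply/eqP; lia | by right; apply/eqP; lia].
  by rewrite !clv_c.
- by have -> : pt l.1 l.2 km1 i = pt l.1 l.2 kk i by apply: val_inj; rewrite /= h1 h2.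
- have c1 : central (pt l.1 l.2 km1 i).
    by rewrite central_val h1; apply/orP; first [by left; apply/eqP; lia | by right; apply/eqP; lia].
  have c2 : central (pt l.1 l.2 kk i).
    by rewrite central_val h2; apply/orP; first [by left; apply/eqP; lia | by right; apply/eqP; lia].
  by rewrite !clv_c.
Qed.

Lemma line_mid l : valid_line l.1 l.2 -> lineof (mid l).1 (mid l).2 = l.
Proof.
move=> hv; have hc := mid_cl hv.
case: l hv hc => p v hv hc /=.
have h1 := fun i => pt_val i hv km1_lt; have h2 := fun i => pt_val i hv kk_lt.
have hd : dirof (mid (p, v)).1 (mid (p, v)).2 = v.
  apply/ffunP => i; apply: val_inj; rewrite /= dirof_val //= h1 h2.
  have := ltn_ord (v i); move: (valid_p2 (i:=i) hv) (valid_p0 (i:=i) hv).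
  case: (v i) => [[|[|[|m]]] ] //= ? ? ?; lia.
congr (_, _); last by [].
apply/ffunP => i; apply: val_inj; rewrite /= ffunE val_insubd hd h1.
move: (valid_p2 (i:=i) hv) (valid_p0 (i:=i) hv) (ltn_ord (p i)) (ltn_ord (v i)).
case: (v i) => [[|[|[|m]]] hm] //= h3 h4 hp _.
- by rewrite (h4 erefl); case: ifP; lia.
- by rewrite hp.
- by rewrite (h3 erefl); case: ifP; lia.
Qed.


Lemma pof_val x y i : cl x = cl y -> (pof x y i : nat) =
  if (dirof x y i == 2 :> nat) then 0 else if (dirof x y i == 0 :> nat) then n.-1 else x i.
Proof.
move=> h; rewrite ffunE val_insubd.
have hx := ltn_ord (x i); case: (dirof x y i == 2 :> nat) => /=; case: (dirof x y i == 0 :> nat) => /=; rewrite ?hx //; case: ifP => //; lia.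
Qed.

Lemma lineof_valid x y : cl x = cl y -> x != y -> valid_line (pof x y) (dirof x y).
Proof.
move=> h hxy; apply/andP; split.
  case: (pickP (fun i => x i != y i)) => [i hi | hn0].
    apply/existsP; exists i; rewrite dirof_val //.
    case: (same_cl i h) => [e|[[h1 h2]|[h1 h2]]]; first by rewrite e eqxx in hi.
    - by rewrite h1 h2; apply/eqP; lia.
    - by rewrite h1 h2; apply/eqP; lia.
  have e : x = y by apply/ffunP => i; apply/eqP; move: (hn0 i) => /= /negbFE.
  by rewrite e eqxx in hxy.
apply/forallP => t; apply/forallP => i.
rewrite /Defs.coord /dval pof_val // dirof_val //.
have := ltn_ord t; have := ltn_ord (x i); have := ltn_ord (y i).
case: (same_cl i h) => [->|[[h1 h2]|[h1 h2]]]; rewrite ?h1 ?h2.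
- have -> : y i + 1 - y i = 1 by lia.
  move=> *; apply/andP; split; rewrite /=; lia.
- have -> : k + 1 - k.-1 = 2 by lia.
  move=> *; apply/andP; split; rewrite /=; lia.
- have -> : k.-1 + 1 - k = 0 by lia.
  move=> *; apply/andP; split; rewrite /=; lia.
Qed.

Lemma mid_lineof x y : cl x = cl y -> x != y -> mid (lineof x y) = (x, y).
Proof.
move=> h hxy; have hv := lineof_valid h hxy.
rewrite /mid /=; congr (_, _); apply/ffunP => i; apply: val_inj => /=;
  first [rewrite (pt_val i hv km1_lt) | rewrite (pt_val i hv kk_lt)]; rewrite (pof_val i h) (dirof_val i h);
  case: (same_cl i h) => [->|[[h1 h2]|[h1 h2]]]; rewrite ?h1 ?h2.
- have -> : y i + 1 - y i = 1 by lia. by [].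
- have -> : k + 1 - k.-1 = 2 by lia. by [].
- have -> : k.-1 + 1 - k = 0 by lia. by rewrite /=; lia.
- have -> : y i + 1 - y i = 1 by lia. by [].
- have -> : k + 1 - k.-1 = 2 by lia. by [].
- have -> : k.-1 + 1 - k = 0 by lia. by rewrite /=; lia.
Qed.


Lemma canon_first (v : dir d) i0 : (v i0 != 1 :> nat) ->
  (forall j, (v j != 1 :> nat) -> i0 <= j) -> canonical_dir v = (v i0 == 2 :> nat).
Proof.
move=> h0 hmin; apply/forallP/idP.
  move/(_ i0); rewrite h0 /=; move/implyP; apply; apply/forallP => j.
  apply/implyP => hj; apply/negPn/negP => hj1.
  by have := hmin j hj1; rewrite leqNgt hj.
move=> h2 i; apply/implyP => /andP [hi /forallP hj].
have le1 := hmin i hi.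
have e : i = i0.
  apply/val_inj/eqP; rewrite eqn_leq le1 andbT leqNgt; apply/negP => lt.
  by have := hj i0; rewrite lt /= (negbTE h0).
by rewrite e.
Qed.

Lemma canon_swap (u v : dir d) : (forall i, (u i : nat) + v i = 2) ->
  [exists i, v i != 1 :> nat] -> canonical_dir u = ~~ canonical_dir v.
Proof.
move=> huv /existsP [j hj].
case: (@arg_minnP _ j (fun i => v i != 1 :> nat) (fun i : 'I_d => i : nat) hj) => i0 hi0 hmin.
have hu0 : (u i0 != 1 :> nat) by have := huv i0; move: hi0; case: eqP => //; lia.
rewrite (canon_first hi0 hmin) (@canon_first u i0 hu0).
  have := huv i0; have := ltn_ord (v i0); move: hi0.
  case: (v i0) => [[|[|[|m]]] hm] //=; case: (u i0) => [[|[|[|m']]] hm'] //=.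
move=> j' hj'; apply: hmin; have := huv j'; move: hj'; case: eqP => //; case: eqP => //; lia.
Qed.


Hypotheses (hw2 : forall t, w t = a \/ w t = b) (hwa : w km1 = a) (hwb : w kk = b)
  (hrev : forall t, w t != w (rev_ord t)).

Lemma hab : a != b.
Proof. by rewrite -hwa -hwb -rev_km1. Qed.

Definition beta (t : 'I_n) : bool := w t != a.
Lemma wE t : w t = if beta t then b else a.
Proof. by rewrite /beta; case: (hw2 t) => ->; rewrite ?eqxx //= eq_sym (negbTE hab). Qed.
Lemma beta_rev t : beta (rev_ord t) = ~~ beta t.
Proof.
have := hrev t; rewrite (wE t) (wE (rev_ord t)).
by case: (beta t); case: (beta (rev_ord t)); rewrite ?eqxx.
Qed.

Definition par (x : point d n) : bool := \big[addb/false]_(i < d) beta (x i).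
Definition G0 (x : point d n) : S := if par x then b else a.

Lemma pt_ord (p : point d n) v (t : 'I_n) i : valid_line p v ->
  pt p v t i = if (v i == 1 :> nat) then p i else if (v i == 2 :> nat) then t else rev_ord t.
Proof.
move=> hv; apply: val_inj; rewrite /= (pt_val i hv (ltn_ord t)).
by case: ifP => //; case: ifP => //= _ _; lia.
Qed.

Lemma par_line (p : point d n) v : valid_line p v ->
  exists C e, forall t : 'I_n, par (pt p v t) = C (+) (e && beta t).
Proof.
move=> hv.
exists (\big[addb/false]_(i < d) (if (v i == 1 :> nat) then beta (p i) else (v i == 0 :> nat))).
exists (\big[addb/false]_(i < d) (v i != 1 :> nat)).
move=> t; rewrite /par.
transitivity (\big[addb/false]_(i < d)
   ((if (v i == 1 :> nat) then beta (p i) else (v i == 0 :> nat)) (+) ((v i != 1 :> nat) && beta t))).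
  apply: eq_bigr => i _; rewrite (pt_ord t i hv).
  have := ltn_ord (v i); case: (v i) => [[|[|[|m]]] hm] //= _.
  - by rewrite beta_rev.
  - by rewrite addbF.
rewrite big_split /=; congr addb.
case: (beta t); rewrite ?andbT ?andbF.
  by apply: eq_bigr => i _; rewrite andbT.
by rewrite big1 // => i _; rewrite andbF.
Qed.

Lemma beta_km1 : beta km1 = false.
Proof. by rewrite /beta hwa eqxx. Qed.
Lemma beta_kk : beta kk = true.
Proof. by rewrite -rev_km1 beta_rev beta_km1. Qed.

Lemma G0_neq x y : (G0 x != G0 y) = (par x != par y).
Proof.
rewrite /G0; case: (par x); case: (par y); rewrite ?eqxx //=.
  by rewrite eq_sym hab.
by rewrite hab.
Qed.

Lemma contains_G0 (p : point d n) v : valid_line p v ->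
  G0 (pt p v km1) != G0 (pt p v kk) -> contains w G0 p v.
Proof.
move=> hv; rewrite G0_neq; have [C [e he]] := par_line hv.
rewrite !he beta_km1 beta_kk andbF andbT.
case: e he; last by rewrite eqxx.
move=> he _; rewrite /contains /G0.
case: C he => he.
  apply/orP; right; apply/forallP => t; rewrite he beta_rev /= negbK.
  by rewrite (wE t); case: (beta t).
apply/orP; left; apply/forallP => t; rewrite he /=.
by rewrite (wE t); case: (beta t).
Qed.


Definition Lw (G : point d n -> S) := [set pv : point d n * dir d |
       [&& canonical_dir pv.2, valid_line pv.1 pv.2 & contains w G pv.1 pv.2]].
Definition E (G : point d n -> S) := [set xy : point d n * point d n |
       [&& cl xy.1 == cl xy.2, G xy.1 == a & G xy.2 == b]].
Definition psi (G : point d n -> S) l :=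
  if G (mid l).1 == a then mid l else ((mid l).2, (mid l).1).
Definition phi (xy : point d n * point d n) :=
  if canonical_dir (dirof xy.1 xy.2) then lineof xy.1 xy.2 else lineof xy.2 xy.1.

Lemma contains_mid G l : contains w G l.1 l.2 ->
  ((G (mid l).1 == a) && (G (mid l).2 == b)) || ((G (mid l).1 == b) && (G (mid l).2 == a)).
Proof.
case/orP => /forallP h.
  by rewrite /mid /= (eqP (h km1)) (eqP (h kk)) hwa hwb !eqxx.
have h1 := h kk; have h2 := h km1; rewrite rev_kk in h1; rewrite rev_km1 in h2.
by rewrite /mid /= (eqP h1) (eqP h2) hwa hwb !eqxx orbT.
Qed.

Lemma upper G : #|Lw G| <= #|E G|.
Proof.
have hab' := hab.
rewrite -(@card_in_imset _ _ (psi G) (Lw G)).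
  apply: subset_leq_card; apply/subsetP => _ /imsetP [l hl ->].
  move: hl; rewrite inE => /and3P [hc hv hcon].
  have hm := mid_cl hv.
  rewrite inE /psi; case/orP: (contains_mid hcon) => /andP [/eqP e1 /eqP e2];
    rewrite e1 ?eqxx.
    by rewrite hm e1 e2 !eqxx.
  have hba : (b == a) = false by rewrite eq_sym (negbTE hab').
  by rewrite hba /= (esym hm) e1 e2 !eqxx.
move=> l1 l2; rewrite !inE => /and3P [hc1 hv1 _] /and3P [hc2 hv2 _].
have e1 := line_mid hv1; have e2 := line_mid hv2.
have hm1 := mid_cl hv1; have hm2 := mid_cl hv2.
have key : mid l1 = mid l2 -> l1 = l2 by move=> e; rewrite -e1 -e2 e.
have nsw : mid l1 <> ((mid l2).2, (mid l2).1).
  move=> e.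
  have hsw : forall i, (l1.2 i : nat) + (l2.2 i : nat) = 2.
    move=> i; have d1 : l1.2 = dirof (mid l1).1 (mid l1).2 := esym (congr1 snd e1).
    have d2 : l2.2 = dirof (mid l2).1 (mid l2).2 := esym (congr1 snd e2).
    rewrite d1 d2 e /=; exact: dirof_swap.
  have h := canon_swap hsw; case/andP: hv2 => hex _.
  by move: (h hex); rewrite hc1 hc2.
rewrite /psi; case: ifP => _; case: ifP => _.
- exact: key.
- by move=> e; exfalso; apply: nsw.
- move=> e; exfalso; apply: nsw; rewrite -e; by case: (mid l1).
- move=> e; apply: key; move: e.
  by case: (mid l1) => x1 y1; case: (mid l2) => x2 y2 /= [-> ->].
Qed.

Lemma psi_phi xy : xy \in E G0 -> psi G0 (phi xy) = xy.
Proof.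
case: xy => x y; rewrite inE /= => /and3P [/eqP hc /eqP hx /eqP hy].
have hxy : x != y by apply/negP => /eqP e; move: hab; rewrite -hx -hy e eqxx.
rewrite /phi /=; case: ifP => _.
  by rewrite /psi mid_lineof // hx eqxx.
rewrite /psi mid_lineof //=; last by rewrite eq_sym.
by rewrite hy eq_sym (negbTE hab).
Qed.

Lemma lower : #|E G0| <= #|Lw G0|.
Proof.
rewrite -(@card_in_imset _ _ phi (E G0)); last first.
  by move=> xy1 xy2 h1 h2 e; rewrite -(psi_phi h1) -(psi_phi h2) e.
apply: subset_leq_card; apply/subsetP => _ /imsetP [[x y] hxy0 ->].
move: (hxy0); rewrite inE /= => /and3P [/eqP hc /eqP hx /eqP hy].
have hxy : x != y by apply/negP => /eqP e; move: hab; rewrite -hx -hy e eqxx.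
have hyx : y != x by rewrite eq_sym.
have hc' : cl y = cl x by [].
rewrite inE /phi /=; case: ifP => hcan /=.
  rewrite hcan (lineof_valid hc hxy) /=.
  apply: contains_G0; first exact: lineof_valid.
  by have := mid_lineof hc hxy; rewrite /mid => -[-> ->]; rewrite hx hy hab.
have -> : canonical_dir (dirof y x).
  rewrite (canon_swap (v := dirof x y)) ?hcan //.
    by move=> i; exact: dirof_swap.
  by case/andP: (lineof_valid hc hxy).
rewrite (lineof_valid hc' hyx) /=.
apply: contains_G0; first exact: lineof_valid.
by have := mid_lineof hc' hyx; rewrite /mid => -[-> ->]; rewrite hx hy eq_sym hab.
Qed.


Lemma sum_option (T : finType) (F : option T -> nat) :
  \sum_(o : option T) F o = F None + \sum_(t : T) F (Some t).
Proof.
rewrite (bigD1 None) //=; congr (_ + _).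
rewrite (reindex_omap Some id) /=; last by case.
by apply: eq_bigl => t; rewrite eqxx.
Qed.

Definition A (G : point d n -> S) (c : {ffun 'I_d -> option 'I_n}) :=
  [set x : point d n | (cl x == c) && (G x == a)].
Definition B (G : point d n -> S) (c : {ffun 'I_d -> option 'I_n}) :=
  [set x : point d n | (cl x == c) && (G x == b)].
Definition fib (c : {ffun 'I_d -> option 'I_n}) := [set x : point d n | cl x == c].
Definition h1 (o : option 'I_n) : nat := if o is Some t then ~~ central t else 2.
Definition h0 (o : option 'I_n) : nat := if o is Some t then ~~ central t else 0.
Definition g (c : {ffun 'I_d -> option 'I_n}) := \prod_(i < d) (h1 (c i) * h1 (c i)).
Definition g0 (c : {ffun 'I_d -> option 'I_n}) := \prod_(i < d) h0 (c i).

Lemma E_sum G : #|E G| = \sum_(c : {ffun 'I_d -> option 'I_n}) #|A G c| * #|B G c|.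
Proof.
rewrite -sum1_card (partition_big (fun xy => cl xy.1) predT) //=.
apply: eq_bigr => c _; rewrite -cardsX -sum1dep_card.
apply: eq_bigl => -[x y]; rewrite !inE /=.
case: (cl x =P c) => [<-|]; rewrite ?andbF ?andbT //=.
by rewrite [cl y == _]eq_sym; case: (G x == a); case: (cl x == cl y).
Qed.

Lemma km1_neq_kk : km1 != kk.
Proof. by rewrite -val_eqE /=; apply/eqP; lia. Qed.

Lemma card_central : #|[pred t | central t]| = 2.
Proof.
by rewrite (eq_card (B := pred2 km1 kk)) ?card2 ?km1_neq_kk // => t; rewrite !inE.
Qed.

Lemma sum_ncentral : \sum_(t : 'I_n) (~~ central t : nat) = n - 2.
Proof.
have e := cardC [pred t | central t]; rewrite card_central card_ord in e.
suff -> : \sum_(t : 'I_n) (~~ central t : nat) = #|[predC [pred t | central t]]|.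
  by rewrite -[in RHS]e addKn.
rewrite -sum1_card [RHS]big_mkcond /=.
by apply: eq_bigr => t _; rewrite !inE; case: (central t).
Qed.

Lemma fib_card c : #|fib c| = \prod_(i < d) h1 (c i).
Proof.
rewrite (eq_card (B := family (fun i => [pred t | clv t == c i]))); last first.
  move=> x; rewrite !inE; apply/eqP/familyP => [<- i|h]; first by rewrite !inE clE.
  by apply/ffunP => i; rewrite clE; apply/eqP; exact: h.
rewrite card_family foldrE big_map big_enum /=; apply: eq_bigr => i _.
case: (c i) => [s|] /=.
  case hs: (central s) => /=.
    apply: eq_card0 => t; rewrite !unfold_in /= /clv; case: ifP => // ht.
    by apply/eqP => -[e]; rewrite e hs in ht.
  rewrite (eq_card (B := pred1 s)) ?card1 // => t; rewrite !unfold_in /= /clv.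
  case: ifP => ht; last by apply/eqP/eqP => [[]|->].
  by apply/esym/eqP => e; rewrite e hs in ht.
rewrite -card_central; apply: eq_card => t; rewrite !unfold_in /= /clv.
by case: (central t).
Qed.

Lemma sum_g : \sum_(c : {ffun 'I_d -> option 'I_n}) g c = (n + 2) ^ d.
Proof.
rewrite /g -(bigA_distr_bigA (fun (i : 'I_d) (o : option 'I_n) => h1 o * h1 o)) /=.
rewrite (eq_bigr (fun _ => n + 2)) ?prod_nat_const ?card_ord // => i _.
rewrite sum_option /=.
have -> : n + 2 = 4 + (n - 2) by lia.
rewrite -sum_ncentral; congr (_ + _); apply: eq_bigr => t _.
by case: (central t).
Qed.

Lemma sum_g0 : \sum_(c : {ffun 'I_d -> option 'I_n}) g0 c = (n - 2) ^ d.
Proof.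
rewrite /g0 -(bigA_distr_bigA (fun (i : 'I_d) (o : option 'I_n) => h0 o)) /=.
rewrite (eq_bigr (fun _ => n - 2)) ?prod_nat_const ?card_ord // => i _.
by rewrite sum_option /= sum_ncentral.
Qed.


Lemma g_fib c : g c = #|fib c| * #|fib c|.
Proof. by rewrite fib_card /g big_split. Qed.

Lemma AB_disj G c : A G c :&: B G c = set0.
Proof.
apply/setP => x; rewrite !inE.
case: (G x =P a) => [->|]; last by rewrite !andbF.
by rewrite eq_sym (negbTE hab) !andbF.
Qed.

Lemma AB_le G c : #|A G c| + #|B G c| <= #|fib c|.
Proof.
rewrite -cardsUI AB_disj cards0 addn0; apply: subset_leq_card.
by apply/subsetP => x; rewrite !inE => /orP [] /andP [].
Qed.

Lemma all_some (c : {ffun 'I_d -> option 'I_n}) : ~~ [exists i, c i == None] -> #|fib c| <= 1 /\ g0 c = g c.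
Proof.
move=> /existsPn hc; split.
  rewrite fib_card; apply: (big_ind (fun m => m <= 1)) => //.
    by move=> x y hx hy; rewrite -[1]/(1 * 1); apply: leq_mul.
  move=> i _; have := hc i; case: (c i) => //= s _; by case: (central s).
apply: eq_bigr => i _; have := hc i; case: (c i) => //= s _; by case: (central s).
Qed.

Lemma some_none (c : {ffun 'I_d -> option 'I_n}) i0 : c i0 = None -> g0 c = 0.
Proof. by move=> h; rewrite /g0 (bigD1 i0) //= h mul0n. Qed.

Lemma amgm (x y : nat) : 4 * (x * y) <= (x + y) * (x + y).
Proof.
case: (leqP x y) => h.
  rewrite -(subnKC h); move: (y - x) => t; nia.
rewrite -(subnKC (ltnW h)); move: (x - y) => t; nia.
Qed.

Lemma bound G c : 4 * (#|A G c| * #|B G c|) + g0 c <= g c.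
Proof.
have hle := AB_le G c; rewrite g_fib.
case: (boolP [exists i, c i == None]) => [/existsP [i0 /eqP h0]|hn0].
  rewrite (some_none h0) addn0.
  have : (#|A G c| + #|B G c|) * (#|A G c| + #|B G c|) <= #|fib c| * #|fib c|.
    exact: leq_mul.
  exact/leq_trans/amgm.
have [h1' h2'] := all_some hn0; rewrite h2' g_fib.
have : #|A G c| * #|B G c| = 0 by nia.
by move=> ->.
Qed.

Definition flip (i0 : 'I_d) (x : point d n) : point d n :=
  [ffun i => if i == i0 then rev_ord (x i) else x i].

Lemma flipK i0 : involutive (flip i0).
Proof.
move=> x; apply/ffunP => i; rewrite !ffunE.
by case: (i == i0) => //; rewrite rev_ordK.
Qed.

Lemma par_flip i0 x : par (flip i0 x) = ~~ par x.
Proof.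
rewrite /par (bigD1 i0) //= [in RHS](bigD1 i0) //= ffunE eqxx beta_rev addNb.
congr (~~ (_ (+) _)); apply: eq_bigr => i hi; rewrite ffunE (negbTE hi) //.
Qed.

Lemma rev_eq1 t : (rev_ord t == km1) = (t == kk).
Proof. by rewrite -rev_kk (inj_eq rev_ord_inj). Qed.
Lemma rev_eq2 t : (rev_ord t == kk) = (t == km1).
Proof. by rewrite -rev_km1 (inj_eq rev_ord_inj). Qed.

Lemma central_rev t : central (rev_ord t) = central t.
Proof. by rewrite /central rev_eq1 rev_eq2 orbC. Qed.

Lemma cl_flip i0 x : cl x i0 = None -> cl (flip i0 x) = cl x.
Proof.
move=> h; apply/ffunP => i; rewrite !clE ffunE.
case: eqP => [->|//]; move: h; rewrite clE /clv central_rev.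
by case: (central (x i0)).
Qed.

Lemma A_le_B (c : {ffun 'I_d -> option 'I_n}) i0 : c i0 = None -> #|A G0 c| <= #|B G0 c|.
Proof.
move=> h0; rewrite -(card_imset _ (can_inj (flipK i0))).
apply: subset_leq_card; apply/subsetP => _ /imsetP [x hx ->].
move: hx; rewrite !inE => /andP [/eqP hc hg].
rewrite cl_flip ?hc ?eqxx /=; last by rewrite ?hc h0.
move: hg; rewrite /G0 par_flip; case: (par x) => //=.
by rewrite eq_sym (negbTE hab).
Qed.

Lemma B_le_A (c : {ffun 'I_d -> option 'I_n}) i0 : c i0 = None -> #|B G0 c| <= #|A G0 c|.
Proof.
move=> h0; rewrite -(card_imset _ (can_inj (flipK i0))).
apply: subset_leq_card; apply/subsetP => _ /imsetP [x hx ->].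
move: hx; rewrite !inE => /andP [/eqP hc hg].
rewrite cl_flip ?hc ?eqxx /=; last by rewrite ?hc h0.
move: hg; rewrite /G0 par_flip; case: (par x) => //=.
by rewrite (negbTE hab).
Qed.

Lemma AB_fib0 c : #|A G0 c| + #|B G0 c| = #|fib c|.
Proof.
rewrite -cardsUI AB_disj cards0 addn0; apply: eq_card => x.
rewrite !inE /G0; case: (cl x == c) => //=.
by case: (par x); rewrite eqxx ?orbT.
Qed.

Lemma bound_eq c : 4 * (#|A G0 c| * #|B G0 c|) + g0 c = g c.
Proof.
have hle := AB_fib0 c; rewrite g_fib.
case: (boolP [exists i, c i == None]) => [/existsP [i0 /eqP h0]|hn0].
  rewrite (some_none h0) addn0.
  have := A_le_B h0; have := B_le_A h0; rewrite -hle; nia.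
have [h1' h2'] := all_some hn0; rewrite h2' g_fib.
have : #|A G0 c| * #|B G0 c| = 0 by nia.
by move=> ->.
Qed.

Lemma E_bound G : 4 * #|E G| + (n - 2) ^ d <= (n + 2) ^ d.
Proof.
rewrite E_sum big_distrr /= -sum_g0 -big_split /= -sum_g.
by apply: leq_sum => c _; exact: bound.
Qed.

Lemma E_eq : 4 * #|E G0| + (n - 2) ^ d = (n + 2) ^ d.
Proof.
rewrite E_sum big_distrr /= -sum_g0 -big_split /= -sum_g.
by apply: eq_bigr => c _; exact: bound_eq.
Qed.


Lemma main_sec : exists m : nat, is_fmax d w m /\ 4 * m = (n + 2) ^ d - (n - 2) ^ d.
Proof.
exists #|E G0|; split; last by have := E_eq; lia.
split.
  exists G0; change (#|Lw G0| = #|E G0|).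
  by apply/eqP; rewrite eqn_leq upper lower.
move=> G; change (#|Lw G| <= #|E G0|).
apply: leq_trans (upper G) _.
by have := E_bound G; have := E_eq; lia.
Qed.

End Main.

Theorem theorem7 (S : eqType) (n d : nat) (w : 'I_n -> S) :
  2 <= n -> 0 < d ->
  (exists a b : S, forall i, w i = a \/ w i = b) ->
  (forall i : 'I_n, w i != w (rev_ord i)) ->
  exists m : nat, is_fmax d w m /\ 4 * m = (n + 2) ^ d - (n - 2) ^ d.
Proof.
move=> hn2 _ [a' [b' hw2']] hrev.
have hodd : ~~ odd n.
  apply/negP => ho.
  have hlt : n./2 < n by have := odd_double_half n; lia.
  have := hrev (Ordinal hlt).
  have -> : rev_ord (Ordinal hlt) = Ordinal hlt.
    by apply: val_inj => /=; have := odd_double_half n; rewrite ho; lia.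
  by rewrite eqxx.
have hn : n = (n./2).*2 by have := odd_double_half n; rewrite (negbTE hodd); lia.
have hk : 0 < n./2 by lia.
set k := n./2 in hn hk.
pose a := w (km1 hn hk); pose b := w (kk hn hk).
have hab : a != b by rewrite /a /b -(rev_km1 hn hk).
have hw2 : forall t, w t = a \/ w t = b.
  move=> t; move: hab; rewrite /a /b.
  case: (hw2' t) => ->; case: (hw2' (km1 hn hk)) => ->; case: (hw2' (kk hn hk)) => ->;
    rewrite ?eqxx //; by [left | right].
exact: (@main_sec S n d k w a b hn hk hw2 erefl erefl hrev).
Qed.
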